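(* Let $\Omega\subseteq\mathbb{F}$ be a P-closed set with finite P-basis $\mathcal{B}$, $n=\mathrm{Rk}(\Omega)$. For any $F\in\mathbb{F}[x;\sigma,\delta]_n$, $$\mathrm{wt}_\Omega(F)=\min\{\mathrm{wt_H}(E_\mathcal{A}(F)) : \mathcal{A}\text{ is a P-basis of }\Omega\}\le \mathrm{wt_H}(E_\mathcal{B}(F)),$$ equivalently, for $f\in\mathbb{F}^\mathcal{B}$, $\mathrm{wt}_\mathcal{B}(f)=\min\{\mathrm{wt_H}(\pi_{\mathcal{B},\mathcal{A}}(f)):\mathcal{A}\text{ a P-basis of }\Omega\}\le\mathrm{wt_H}(f)$.
   Context: $\mathbb{F}$ is a division ring, $\sigma$ a ring endomorphism of $\mathbb{F}$, $\delta$ a $\sigma$-derivation ($\delta$ additive, $\delta(ab)=\sigma(a)\delta(b)+\delta(a)b$). $\mathbb{F}[x;\sigma,\delta]$ is the skew polynomial ring (left $\mathbb{F}$-space with basis $x^i$, $xa=\sigma(a)x+\delta(a)$); $\mathbb{F}[x;\sigma,\delta]_n$ are those of degree $<n$. Evaluation: $F(a)$ is the unique element with $F-F(a)\in\mathbb{F}[x;\sigma,\delta](x-a)$; $E_\Omega(F)\in\mathbb{F}^\Omega$ is $a\mapsto F(a)$. $Z(A)$ is the set of common zeros of $A$, $I(\Omega)$ the left ideal of polynomials vanishing on $\Omega$, generated by its monic minimal-degree element $F_\Omega$; $\overline{\Omega}=Z(I(\Omega))$ is the P-closure, $\Omega$ is P-closed if $\overline\Omega=\Omega$, P-independent if no $a\in\Omega$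 lies in $\overline{\Omega\setminus\{a\}}$; a P-basis of a P-closed $\Omega$ is a P-independent generating subset. $\mathrm{Rk}(\Omega)=\deg F_\Omega$ equals the size of any P-basis. For a P-basis $\mathcal{B}$ with $n$ elements, $E_\mathcal{B}:\mathbb{F}[x;\sigma,\delta]_n\to\mathbb{F}^\mathcal{B}$ is bijective. Skew weight: $\mathrm{wt}_\Omega(F)=n-\mathrm{Rk}(Z(F)\cap\Omega)$ for $\deg F<n$, and $\mathrm{wt}_\mathcal{B}(E_\mathcal{B}(F))=\mathrm{wt}_\Omega(F)$. $\pi_{\mathcal{B},\mathcal{A}}(E_\mathcal{B}(F))=E_\mathcal{A}(F)$. For $f\in\mathbb{F}^\mathcal{A}$, the Hamming weight is $\mathrm{wt_H}(f)=\#\{a\in\mathcal{A}: f(a)\ne0\}$. *)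

(* Defs.v *)
From HB Require Import structures.
From mathcomp Require Import all_boot all_order all_algebra.
From Stdlib Require Import ClassicalEpsilon.
Set Implicit Arguments. Unset Strict Implicit. Unset Printing Implicit Defensive.
Import GRing.Theory.
Local Open Scope ring_scope.

Section Skew.
Variable F : unitRingType.
Variable sigma : F -> F.
Variable delta : F -> F.

(* A skew polynomial sum_i f_i x^i is represented by its (left) coefficient
   sequence, i.e. by an element of {poly F} used only as a left F-space. *)

(* x * (sum_j b_j x^j) = sum_j sigma(b_j) x^(j+1) + delta(b_j) x^j *)
Definition skew_mulX (p : {poly F}) : {poly F} :=
  map_poly sigma p * 'X + map_poly delta p.

Definition skew_mul (P G : {poly F}) : {poly F} :=
  \sum_(i < size P) P`_i *: iter i skew_mulX G.

Definition skew_eval (P : {poly F}) (a : F) : F :=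
  epsilon (inhabits 0)
    (fun e => exists Q : {poly F}, P - e%:P = skew_mul Q ('X - a%:P)).

Definition Zset (A : {poly F} -> Prop) : F -> Prop :=
  fun a => forall P, A P -> skew_eval P a = 0.
Definition Zpoly (P : {poly F}) : F -> Prop := Zset (fun Q => Q = P).

Definition Iset (Om : F -> Prop) : {poly F} -> Prop :=
  fun P => forall a, Om a -> skew_eval P a = 0.

Definition Pclosure (Om : F -> Prop) : F -> Prop := Zset (Iset Om).

Definition Pclosed (Om : F -> Prop) : Prop :=
  forall a, Pclosure Om a <-> Om a.

Definition Pindependent (Om : F -> Prop) : Prop :=
  forall a, Om a -> ~ Pclosure (fun b => Om b /\ b <> a) a.

Definition Pbasis (B : seq F) (Om : F -> Prop) : Prop :=
  [/\ uniq B, (forall b, b \in B -> Om b),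
      Pindependent (fun b => b \in B)
    & forall a, Pclosure (fun b => b \in B) a <-> Om a].

Definition rank_spec (Om : F -> Prop) (n : nat) : Prop :=
  (exists G : {poly F}, G \is monic /\ Iset Om G /\ size G = n.+1) /\
  (forall G : {poly F}, G != 0 -> Iset Om G -> (n.+1 <= size G)%N).

Definition Rk (Om : F -> Prop) : nat := epsilon (inhabits 0%N) (rank_spec Om).

Definition skew_wt (Om : F -> Prop) (P : {poly F}) : nat :=
  (Rk Om - Rk (fun a => Zpoly P a /\ Om a))%N.

Definition evalvec (A : seq F) (P : {poly F}) : seq F := map (skew_eval P) A.
Definition wtH (v : seq F) : nat := count (fun c => c != 0) v.

End Skew.

(* Main.v *)
Require Import Defs.
From HB Require Import structures.
From mathcomp Require Import all_boot all_order all_algebra.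
From Stdlib Require Import ClassicalEpsilon Classical.
From mathcomp Require Import zify.
Set Implicit Arguments. Unset Strict Implicit. Unset Printing Implicit Defensive.
Import GRing.Theory.
Local Open Scope ring_scope.

Section Alg.
Variable F : unitRingType.
Hypothesis Fdiv : forall c : F, c != 0 -> c \is a GRing.unit.
Implicit Types (P Q G p q : {poly F}).
Variable sigma : {rmorphism F -> F}.
Variable delta : F -> F.
Hypothesis delta_add : forall a b, delta (a + b) = delta a + delta b.
Hypothesis delta_mul : forall a b, delta (a * b) = sigma a * delta b + delta a * b.

Local Notation mulX := (skew_mulX sigma delta).
Local Notation smul := (skew_mul sigma delta).
Local Notation ev := (skew_eval sigma delta).

Lemma delta0 : delta 0 = 0.
Proof. have := delta_add 0 0; rewrite addr0 -{1}(addr0 (delta 0)).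
by move/addrI. Qed.

Lemma coef_nz_size (p : {poly F}) i : p`_i != 0 -> (i < size p)%N.
Proof. by apply: contraR; rewrite -leqNgt => H; rewrite nth_default. Qed.

Lemma coef_mulX p i :
  (mulX p)`_i = (if i is j.+1 then sigma p`_j else 0) + delta p`_i.
Proof.
rewrite /skew_mulX coefD coefMX (coef_map_id0 _ _ delta0) coef_map_id0 ?rmorph0 //.
by case: i.
Qed.

Lemma mulXD p q : mulX (p + q) = mulX p + mulX q.
Proof.
apply/polyP => i; rewrite [in LHS]coef_mulX [in RHS]coefD !coef_mulX coefD delta_add.
case: i => [|i]; rewrite ?coefD ?rmorphD; rewrite ?addr0 ?add0r; first by [].
by rewrite addrACA.
Qed.

Lemma mulX0 : mulX 0 = 0.
Proof. apply/polyP => i; rewrite coef_mulX !coef0 delta0; case: i => [|i]; rewrite ?coef0 ?rmorph0 addr0 //. Qed.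

Lemma mulXZ c p : mulX (c *: p) = sigma c *: mulX p + delta c *: p.
Proof.
apply/polyP => i; rewrite [in LHS]coef_mulX [in RHS]coefD [in RHS]coefZ coef_mulX !coefZ delta_mul mulrDr.
case: i => [|i]; rewrite ?coefZ ?rmorphM ?mulr0 ?add0r //.
by rewrite addrA.
Qed.

Lemma iterXD k p q : iter k mulX (p + q) = iter k mulX p + iter k mulX q.
Proof. by elim: k => //= k ->; rewrite mulXD. Qed.

Lemma iterX0 k : iter k mulX 0 = 0.
Proof. by elim: k => //= k ->; rewrite mulX0. Qed.

Lemma smul_sum P G n : (size P <= n)%N ->
  smul P G = \sum_(i < n) P`_i *: iter i mulX G.
Proof.
move=> Hn; rewrite /skew_mul -(subnKC Hn).
elim: (n - size P)%N => [|k IH]; first by rewrite addn0.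
by rewrite addnS big_ord_recr /= -IH nth_default ?leq_addr // scale0r addr0.
Qed.

Lemma smul_lin c P Q G : smul (c *: P + Q) G = c *: smul P G + smul Q G.
Proof.
set n := maxn (size P) (size Q).
have hP : (size P <= n)%N by rewrite leq_maxl.
have hQ : (size Q <= n)%N by rewrite leq_maxr.
have hPQ : (size (c *: P + Q)%R <= n)%N.
  by rewrite (leq_trans (size_polyD _ _)) // geq_max (leq_trans (size_scale_leq _ _)).
rewrite (smul_sum _ hPQ) (smul_sum _ hP) (smul_sum _ hQ) scaler_sumr -big_split /=.
by apply: eq_bigr => i _; rewrite coefD coefZ scalerDl scalerA.
Qed.

Lemma smul0l G : smul 0 G = 0.
Proof. by rewrite (@smul_sum _ _ 0) ?size_poly0 // big_ord0. Qed.

Lemma smulDl P Q G : smul (P + Q) G = smul P G + smul Q G.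
Proof. by have := smul_lin 1 P Q G; rewrite !scale1r. Qed.

Lemma smulZl c P G : smul (c *: P) G = c *: smul P G.
Proof. by rewrite -(addr0 (c *: P)) smul_lin smul0l addr0. Qed.

Lemma smulBl P Q G : smul (P - Q) G = smul P G - smul Q G.
Proof. by rewrite addrC -scaleN1r smul_lin scaleN1r addrC. Qed.

Lemma smulDr P G1 G2 : smul P (G1 + G2) = smul P G1 + smul P G2.
Proof.
rewrite /skew_mul -big_split /=; apply: eq_bigr => i _.
by rewrite iterXD scalerDr.
Qed.

Lemma smul0r P : smul P 0 = 0.
Proof. rewrite /skew_mul big1 // => i _; by rewrite iterX0 scaler0. Qed.

Lemma smulC c G : smul c%:P G = c *: G.
Proof.
rewrite (@smul_sum _ _ 1) ?size_polyC ?leq_b1 //.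
by rewrite big_ord1 coefC.
Qed.

Lemma smulXn k G : smul 'X^k G = iter k mulX G.
Proof.
rewrite (@smul_sum _ _ k.+1) ?size_polyXn // big_ord_recr /= coefXn eqxx scale1r.
rewrite big1 ?add0r // => i _; by rewrite coefXn (ltn_eqF (ltn_ord i)) scale0r.
Qed.

Lemma smulXsub b G : smul ('X - b%:P) G = mulX G - b *: G.
Proof.
rewrite (@smul_sum _ _ 2) ?size_XsubC // !big_ord_recl big_ord0 addr0 /=.
rewrite !coefB !coefX !coefC /= subr0 sub0r scale1r scaleNr addrC.
by [].
Qed.

Lemma smul_sumr I (r : seq I) (p : pred I) (f : I -> {poly F}) G :
  smul (\sum_(i <- r | p i) f i) G = \sum_(i <- r | p i) smul (f i) G.
Proof. exact: (big_morph (fun P => smul P G) (fun P Q => smulDl P Q G) (smul0l G)). Qed.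

Lemma mulX_sum I (r : seq I) (p : pred I) (f : I -> {poly F}) :
  mulX (\sum_(i <- r | p i) f i) = \sum_(i <- r | p i) mulX (f i).
Proof. exact: (big_morph mulX mulXD mulX0). Qed.

Lemma size_mulX_le p : (size (mulX p) <= (size p).+1)%N.
Proof.
apply/leq_sizeP => j hj; rewrite coef_mulX nth_default ?delta0 ?addr0; last first.
  exact: leq_trans (leqnSn _) hj.
by case: j hj => // j hj; rewrite nth_default ?rmorph0.
Qed.

Lemma smul_mulX Q G : smul (mulX Q) G = mulX (smul Q G).
Proof.
rewrite (@smul_sum _ _ (size Q).+1) ?size_mulX_le // /skew_mul mulX_sum.
under eq_bigr do rewrite coef_mulX scalerDl.
rewrite big_split /= big_ord_recl big_ord_recr /= scale0r add0r nth_default //.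
rewrite delta0 scale0r addr0 -big_split /=; apply: eq_bigr => i _.
by rewrite mulXZ.
Qed.

Lemma smul_iterX k Q G : smul (iter k mulX Q) G = iter k mulX (smul Q G).
Proof. by elim: k => //= k <-; rewrite smul_mulX. Qed.

Lemma smulA P Q G : smul (smul P Q) G = smul P (smul Q G).
Proof.
have -> : smul P Q = \sum_(i < size P) P`_i *: iter i mulX Q by [].
rewrite smul_sumr [smul P _]/skew_mul; apply: eq_bigr => i _.
by rewrite smulZl smul_iterX.
Qed.


Lemma monic_size_gt0 p : p \is monic -> (0 < size p)%N.
Proof. by move/monic_neq0; rewrite size_poly_gt0. Qed.

Lemma mulX_monic p : p \is monic -> mulX p \is monic /\ size (mulX p) = (size p).+1.
Proof.
move=> mp; have sp := monic_size_gt0 mp.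
have hc : (mulX p)`_(size p) = 1.
  rewrite coef_mulX (nth_default _ (leqnn _)) delta0 addr0 -(prednK sp).
  by rewrite /= -lead_coefE (eqP mp) rmorph1.
have hs : size (mulX p) = (size p).+1.
  apply/eqP; rewrite eqn_leq size_mulX_le /=; apply: coef_nz_size.
  by rewrite hc oner_neq0.
by split => //; rewrite monicE lead_coefE hs /= hc.
Qed.

Lemma iterX_monic k G : G \is monic ->
  iter k mulX G \is monic /\ size (iter k mulX G) = (size G + k)%N.
Proof.
move=> mG; elim: k => [|k [mk sk]] /=; first by rewrite addn0.
by have [-> ->] := mulX_monic mk; rewrite sk addnS.
Qed.

Lemma XsubG_monic b G : G \is monic ->
  smul ('X - b%:P) G \is monic /\ size (smul ('X - b%:P) G) = (size G).+1.
Proof.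
move=> mG; have [m1 s1] := mulX_monic mG.
have hlt : (size (- (b *: G)) < size (mulX G))%N.
  by rewrite size_polyN s1 ltnS size_scale_leq.
rewrite smulXsub; split; last by rewrite size_polyDl.
by rewrite monicE lead_coefDl // (eqP m1).
Qed.

Lemma smul_coef_top Q G : Q != 0 -> G \is monic ->
  (smul Q G)`_((size Q).-1 + (size G).-1) = lead_coef Q.
Proof.
move=> nQ mG; have sG := monic_size_gt0 mG.
have sQ : (0 < size Q)%N by rewrite size_poly_gt0.
rewrite (smul_sum G (leqnn (size Q))) -(prednK sQ) big_ord_recr /= coefD coef_sum.
rewrite big1 ?add0r; last first.
  move=> i _; rewrite coefZ [X in _ * X]nth_default ?mulr0 //.
  have [_ ->] := iterX_monic i mG.
  by rewrite -{1}(prednK sG) addSn -addnS [X in (_ <= X)%N]addnC leq_add2l ltn_ord.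
have [mk sk] := iterX_monic (size Q).-1 mG.
rewrite coefZ addnC.
have -> : ((size G).-1 + (size Q).-1 = (size (iter (size Q).-1 mulX G)).-1)%N.
  by rewrite sk -{2}(prednK sG) addSn.
have := eqP mk; rewrite lead_coefE => ->; by rewrite mulr1 lead_coefE.
Qed.

Lemma smul_size_gt Q G : Q != 0 -> G \is monic ->
  ((size Q).-1 + (size G).-1 < size (smul Q G))%N.
Proof.
move=> nQ mG; apply: coef_nz_size; rewrite smul_coef_top //.
by rewrite lead_coef_eq0.
Qed.

Lemma sdiv G H : G \is monic -> exists Q R, H = smul Q G + R /\ (size R < size G)%N.
Proof.
move=> mG; have sG := monic_size_gt0 mG.
elim: {H}(size H).+1 {-2}H (ltnSn (size H)) => // m IH H hH.
have [lt|ge] := ltnP (size H) (size G).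
  by exists 0, H; rewrite smul0l add0r.
set k := (size H - size G)%N.
have [mk sk] := iterX_monic k mG.
have sH : (size H = size G + k)%N by rewrite subnKC.
set H' := H - lead_coef H *: iter k mulX G.
have hH' : (size H' < m)%N.
  have hpos : (0 < size H)%N := leq_trans sG ge.
  apply: (@leq_trans (size H)); last by rewrite -ltnS.
  rewrite -(prednK hpos) ltnS; apply/leq_sizeP => j hj; rewrite coefB coefZ.
  move: hj; rewrite leq_eqVlt => /orP [/eqP ej|hj].
    have e1 : (size (iter k mulX G)).-1 = j by rewrite sk -sH.
    have h1 : (iter k mulX G)`_j = 1 by rewrite -e1; have := eqP mk; rewrite lead_coefE.
    have h2 : H`_j = lead_coef H by rewrite -ej lead_coefE.
    by rewrite h1 h2 mulr1 subrr.
  rewrite !nth_default ?mulr0 ?subr0 //; first by rewrite sk -sH (leq_trans _ hj) // prednK.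
  by rewrite (leq_trans _ hj) // prednK.
have [Q [R [eH' sR]]] := IH H' hH'.
exists (lead_coef H *: 'X^k + Q), R; split => //.
rewrite smul_lin smulXn -addrA -eH' /H'.
by rewrite addrC subrK.
Qed.

Lemma ev_spec P a : exists Q, P - (ev P a)%:P = smul Q ('X - a%:P).
Proof.
apply: (epsilon_spec (inhabits 0) (fun e => exists Q, P - e%:P = smul Q ('X - a%:P))).
have [Q [R [eP sR]]] := sdiv P (monicXsubC a).
exists R`_0, Q; rewrite eP -(size1_polyC (p:=R)).
  by rewrite addrK.
by rewrite size_XsubC in sR.
Qed.

Lemma ev_char P a e Q : P - e%:P = smul Q ('X - a%:P) -> ev P a = e.
Proof.
move=> eP; have [Q' eQ'] := ev_spec P a.
have : e%:P - (ev P a)%:P = smul (Q' - Q) ('X - a%:P).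
  by rewrite smulBl -eQ' -eP opprB [RHS]addrC addrA subrK.
have [->|nz] := eqVneq (Q' - Q) 0.
  by rewrite smul0l => /eqP; rewrite subr_eq0 => /eqP /polyC_inj ->.
move=> h; have := smul_size_gt nz (monicXsubC a).
rewrite -h size_XsubC addn1 ltnNge.
have hs : (size (e%:P - (ev P a)%:P)%R <= 1)%N by rewrite -polyCB size_polyC leq_b1.
by rewrite (leq_trans hs).
Qed.

Lemma ev_lin c P Q a : ev (c *: P + Q) a = c * ev P a + ev Q a.
Proof.
have [P1 e1] := ev_spec P a; have [Q1 e2] := ev_spec Q a.
apply: (ev_char (Q := c *: P1 + Q1)).
by rewrite smul_lin -e1 -e2 polyCD -scale_polyC scalerBr opprD addrACA.
Qed.

Lemma ev0 a : ev 0 a = 0.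
Proof. by apply: (ev_char (Q := 0)); rewrite smul0l subr0. Qed.

Lemma evZ c P a : ev (c *: P) a = c * ev P a.
Proof. by have := ev_lin c P 0 a; rewrite addr0 ev0 addr0. Qed.

Lemma evB P Q a : ev (P - Q) a = ev P a - ev Q a.
Proof. by have := ev_lin (-1) Q P a; rewrite scaleN1r mulN1r addrC => ->; rewrite addrC. Qed.

Lemma ev_smul H G a : ev G a = 0 -> ev (smul H G) a = 0.
Proof.
move=> eG; have [Q eQ] := ev_spec G a; rewrite eG subr0 in eQ.
by apply: (ev_char (Q := smul H Q)); rewrite subr0 eQ smulA.
Qed.

Lemma ev_conj G a : ev G a != 0 ->
  ev (smul ('X - ((sigma (ev G a) * a + delta (ev G a)) * (ev G a)^-1)%:P) G) a = 0.
Proof.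
set c := ev G a; set b := (_ * _^-1) => nc.
have [Q eQ] := ev_spec G a.
have -> : G = smul Q ('X - a%:P) + c%:P by rewrite -eQ subrK.
apply: (ev_char (Q := smul ('X - b%:P) Q + (sigma c)%:P)).
rewrite subr0 smulDr -smulA smulDl; congr (_ + _).
rewrite smulC smulXsub; apply/polyP => i.
rewrite coefB coef_mulX !coefZ coefB coefX !coefC.
case: i => [|[|i]] /=; rewrite ?mulr0 ?mulr1 ?subr0 ?sub0r ?delta0 ?addr0 ?rmorph0 //.
  by rewrite add0r /b -mulrA mulVr ?Fdiv // mulr1 opprD addrCA subrr addr0 mulrN.
  by rewrite coefC /= mulr1.
by rewrite coefC mulr0 rmorph0.
Qed.



Implicit Types (X Y : F -> Prop).
Local Notation Iset := (Iset sigma delta).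
Local Notation cl := (Pclosure sigma delta).
Local Notation Rk := (Rk sigma delta).
Local Notation rspec := (rank_spec sigma delta).

Definition has_nz X := exists G, G != 0 /\ Iset X G.
Definition sub X Y := forall a, X a -> Y a.

Lemma Iset_cl X Y G : sub X (cl Y) -> Iset Y G -> Iset X G.
Proof. by move=> hs hG a /hs; apply. Qed.

Lemma cl_sub X : sub X (cl X).
Proof. by move=> a Xa G; apply. Qed.

Lemma sub_cl X Y : sub X Y -> sub X (cl Y).
Proof. by move=> h a /h; apply: cl_sub. Qed.

Lemma cl_mono X Y : sub X (cl Y) -> sub (cl X) (cl Y).
Proof. by move=> h a ca G hG; apply: ca; apply: Iset_cl hG. Qed.

Lemma has_nz_sub X Y : sub X (cl Y) -> has_nz Y -> has_nz X.
Proof. by move=> h [G [nG hG]]; exists G; split => //; apply: Iset_cl hG. Qed.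

Lemma IsetZ X c G : Iset X G -> Iset X (c *: G).
Proof. by move=> h a Xa; rewrite evZ // h // mulr0. Qed.

Lemma IsetB X P Q : Iset X P -> Iset X Q -> Iset X (P - Q).
Proof. by move=> h1 h2 a Xa; rewrite evB // h1 // h2 // subrr. Qed.

Lemma IsetM X H G : Iset X G -> Iset X (smul H G).
Proof. by move=> h a Xa; apply: ev_smul => //; apply: h. Qed.

Lemma rspec_ex X : has_nz X -> exists n, rspec X n.
Proof.
move=> [G0 [nG0 hG0]].
suff: forall m G, (size G <= m)%N -> G != 0 -> Iset X G -> exists n, rspec X n.
  by move=> /(_ _ G0 (leqnn _) nG0 hG0).
elim=> [|m IH] G sG nG hG.
  by move: nG; rewrite -size_poly_eq0; move: sG; rewrite leqn0 => ->.
case: (classic (exists G', [/\ G' != 0, Iset X G' & (size G' < size G)%N])).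
  move=> [G' [nG' hG' sG']]; apply: (IH G') => //.
  by rewrite -ltnS (leq_trans sG' sG).
move=> hmin.
have lc : lead_coef G != 0 by rewrite lead_coef_eq0.
have sp : (0 < size G)%N by rewrite size_poly_gt0.
set G' := (lead_coef G)^-1 *: G.
have c1 : G'`_(size G).-1 = 1 by rewrite coefZ -lead_coefE mulVr ?Fdiv.
have sG' : size G' = size G.
  apply/eqP; rewrite eqn_leq size_scale_leq /= -{1}(prednK sp).
  by apply: coef_nz_size; rewrite c1 oner_neq0.
exists (size G).-1; split.
  exists G'; split; first by rewrite monicE lead_coefE sG' c1.
  by split; [apply: IsetZ | rewrite prednK].
move=> H nH hH; rewrite prednK // leqNgt; apply/negP => lt.
by apply: hmin; exists H.
Qed.

Lemma Rk_spec X : has_nz X -> rspec X (Rk X).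
Proof. by move=> /rspec_ex h; apply: epsilon_spec. Qed.

Lemma Rk_le X G : has_nz X -> G != 0 -> Iset X G -> (Rk X < size G)%N.
Proof. by move=> /Rk_spec [_ h] nG hG; apply: h. Qed.

Lemma Rk_min X : has_nz X ->
  exists G, [/\ G \is monic, Iset X G & size G = (Rk X).+1].
Proof. by move=> /Rk_spec [[G [mG [hG sG]]] _]; exists G. Qed.

Lemma Rk_clsub X Y : has_nz Y -> sub X (cl Y) -> (Rk X <= Rk Y)%N.
Proof.
move=> nzY hs; have nzX := has_nz_sub hs nzY.
have [G [mG hG sG]] := Rk_min nzY.
rewrite -ltnS -sG; apply: Rk_le => //; first exact: monic_neq0.
exact: Iset_cl hG.
Qed.

Lemma Rk_sub X Y : has_nz Y -> sub X Y -> (Rk X <= Rk Y)%N.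
Proof. by move=> h /sub_cl; apply: Rk_clsub. Qed.

Definition addp X s := fun a => X a \/ a = s.

Lemma Rk_add1 X s : has_nz X -> has_nz (addp X s) /\ (Rk (addp X s) <= (Rk X).+1)%N.
Proof.
move=> nzX; have [G [mG hG sG]] := Rk_min nzX.
have [e0|ne] := eqVneq (ev G s) 0.
  have hG' : Iset (addp X s) G by move=> a [/hG|->].
  have nzs : has_nz (addp X s) by exists G; split => //; apply: monic_neq0.
  by split => //; apply: ltnW; rewrite -sG Rk_le // monic_neq0.
pose H := smul ('X - ((sigma (ev G s) * s + delta (ev G s)) * (ev G s)^-1)%:P) G.
have [mH sH] : H \is monic /\ size H = (size G).+1 := XsubG_monic _ mG.
have hH : Iset (addp X s) H.
  move=> a [Xa|->]; first by apply: ev_smul => //; apply: hG.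
  exact: ev_conj.
have nzs : has_nz (addp X s) by exists H; split => //; apply: monic_neq0.
by split => //; rewrite -ltnS -sG -sH Rk_le // monic_neq0.
Qed.

Lemma Rk_gt X s : has_nz X -> ~ cl X s -> (Rk X < Rk (addp X s))%N.
Proof.
move=> nzX ncl; have [nzs _] := Rk_add1 s nzX.
have le : (Rk X <= Rk (addp X s))%N by apply: Rk_sub => // a Xa; left.
rewrite ltn_neqAle le andbT; apply/negP => /eqP eR; apply: ncl.
have [G [mG hG sG]] := Rk_min nzs.
have hGX : Iset X G by move=> a Xa; apply: hG; left.
move=> P hP.
have [Q [R [eP sR]]] := sdiv P mG.
have hR : Iset X R.
  have -> : R = P - smul Q G by rewrite eP addrC addKr.
  by apply: IsetB => //; apply: IsetM.
have R0 : R = 0.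
  apply/eqP; apply: contraT => nR; have := Rk_le nzX nR hR.
  by rewrite ltnNge -ltnS eR -sG sR.
rewrite eP R0 addr0; apply: ev_smul => //; by apply: hG; right.
Qed.


Definition lp (C : seq F) : F -> Prop := fun b => b \in C.

Lemma Rk_list C : has_nz (lp C) /\ (Rk (lp C) <= size C)%N.
Proof.
elim: C => [|c C [nz le]].
  have nz : has_nz (lp [::]) by exists 1; split; [exact: oner_neq0 | by []].
  have h1 : Iset (lp [::]) 1 by [].
  split => //; have := Rk_le nz (oner_neq0 _) h1.
  by rewrite size_poly1.
have [nz' le'] := Rk_add1 c nz.
have hs : sub (lp (c :: C)) (cl (addp (lp C) c)).
  by apply: sub_cl => b; rewrite /lp in_cons => /orP [/eqP ->|bC]; [right|left].
split; first exact: has_nz_sub hs nz'.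
by rewrite (leq_trans (Rk_clsub nz' hs)) // (leq_trans le').
Qed.

Lemma indep_sub X Y : sub X Y -> Pindependent sigma delta Y -> Pindependent sigma delta X.
Proof.
move=> h iY a Xa ca; apply: (iY a (h a Xa)); apply: cl_mono ca.
by apply: sub_cl => b [Xb nb]; split => //; apply: h.
Qed.

Lemma indep_Rk C : uniq C -> Pindependent sigma delta (lp C) -> Rk (lp C) = size C.
Proof.
elim: C => [|c C IH] /=.
  by move=> _ _; apply/eqP; rewrite -leqn0; have [_ ->] := Rk_list [::].
move=> /andP [cnC uC] iC.
have iC' : Pindependent sigma delta (lp C).
  by apply: indep_sub iC => b bC; rewrite /lp in_cons bC orbT.
have ncl : ~ cl (lp C) c.
  move=> h; apply: (iC c (mem_head _ _)); apply: cl_mono h.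
  apply: sub_cl => b bC; split; first by rewrite /lp in_cons bC orbT.
  by move=> ebc; rewrite -ebc bC in cnC.
have [nz _] := Rk_list C; have [nz' le'] := Rk_list (c :: C).
have gt := Rk_gt nz ncl.
have le2 : (Rk (addp (lp C) c) <= Rk (lp (c :: C)))%N.
  by apply: Rk_sub => // b [bC|->]; rewrite /lp in_cons ?eqxx ?bC ?orbT.
apply/eqP; rewrite eqn_leq le' /=.
by rewrite -(IH uC iC') (leq_trans gt le2).
Qed.

Lemma indep_cons C s : uniq C -> Pindependent sigma delta (lp C) -> ~ cl (lp C) s ->
  uniq (s :: C) /\ Pindependent sigma delta (lp (s :: C)).
Proof.
move=> uC iC ncl.
have sC : s \notin C by apply/negP => sC; apply: ncl; apply: cl_sub.
split; first by rewrite /= sC uC.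
move=> a; rewrite /lp in_cons => /orP [/eqP ->|aC] ca.
  apply: ncl; apply: cl_mono ca; apply: sub_cl => b [].
  by rewrite in_cons => /orP [/eqP ->|] .
pose L := filter (fun b => b != a) (s :: C).
have [nzL leL] := Rk_list L.
have hsub : sub (lp (s :: C)) (cl (lp L)).
  have h1 : sub (fun b => b \in s :: C /\ b <> a) (cl (lp L)).
    by apply: sub_cl => b [bs ba]; rewrite /lp mem_filter bs andbT; apply/eqP.
  move=> b bs; have [eba|nba] := eqVneq b a.
    by rewrite eba; apply: (cl_mono h1).
  by apply: h1; split => //; apply/eqP.
have hL : (size L < size (s :: C))%N.
  rewrite size_filter -(count_predC (fun b => b != a)) -{1}(addn0 (count _ _)) ltn_add2l.
  rewrite -has_count; apply/hasP; exists a; first by rewrite in_cons aC orbT.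
  by rewrite /= negbK.
have [nz _] := Rk_list C; have [nz' _] := Rk_list (s :: C).
have gt := Rk_gt nz ncl.
have le2 : (Rk (addp (lp C) s) <= Rk (lp (s :: C)))%N.
  by apply: Rk_sub => // b [bC|->]; rewrite /lp in_cons ?eqxx ?bC ?orbT.
have le3 := Rk_clsub nzL hsub.
move: hL; rewrite /= ltnS => hL.
have := leq_trans (leq_trans (leq_trans gt le2) le3) (leq_trans leL hL).
by rewrite indep_Rk // ltnn.
Qed.


Lemma greedy T C : has_nz T -> uniq C -> Pindependent sigma delta (lp C) -> sub (lp C) T ->
  exists A, [/\ uniq A, Pindependent sigma delta (lp A), sub (lp A) T,
               sub T (cl (lp A)) & sub (lp C) (lp A)].
Proof.
move=> nzT.
suff: forall k C, (Rk T - size C <= k)%N -> uniq C -> Pindependent sigma delta (lp C) ->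
  sub (lp C) T -> exists A, [/\ uniq A, Pindependent sigma delta (lp A), sub (lp A) T,
               sub T (cl (lp A)) & sub (lp C) (lp A)].
  by move=> /(_ _ C (leqnn _)).
elim=> [|k IH] {}C hk uC iC sC;
  (case: (classic (exists s, T s /\ ~ cl (lp C) s)) => [[s [Ts ncl]]|hno];
   last by exists C; split => // a Ta; apply: NNPP => h; apply: hno; exists a).
- have [u' i'] := indep_cons uC iC ncl.
  have sC' : sub (lp (s :: C)) T by move=> b; rewrite /lp in_cons => /orP [/eqP ->|/sC].
  have := Rk_sub nzT sC'; rewrite indep_Rk //= => h; exfalso; rewrite leqn0 subn_eq0 in hk; by rewrite ltnNge hk in h.
- have [u' i'] := indep_cons uC iC ncl.
  have sC' : sub (lp (s :: C)) T by move=> b; rewrite /lp in_cons => /orP [/eqP ->|/sC].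
  have := Rk_sub nzT sC'; rewrite indep_Rk //= => h.
  have [A [uA iA sA clA sCA]] := IH (s :: C) ltac:(move: hk h => /=; lia) u' i' sC'.
  exists A; split => // b bC; apply: sCA; by rewrite /lp in_cons bC orbT.
Qed.

Lemma main_sec (Om : F -> Prop) (B : seq F)
  (HOm : Pclosed sigma delta Om) (HB : Pbasis sigma delta B Om)
  (P : {poly F}) :
  let w := skew_wt sigma delta Om P in
  [/\ (exists A : seq F, Pbasis sigma delta A Om /\
         wtH (evalvec sigma delta A P) = w),
      (forall A : seq F, Pbasis sigma delta A Om ->
         (w <= wtH (evalvec sigma delta A P))%N)
    & (w <= wtH (evalvec sigma delta B P))%N].
Proof.
move=> w.
have [uB hBO iB hcl] := HB.
have [nzB _] := Rk_list B.
have nzO : has_nz Om by apply: has_nz_sub nzB => a /hcl.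
have Rk_basis : forall A, Pbasis sigma delta A Om -> Rk Om = size A.
  move=> A [uA hAO iA hclA]; have [nzA _] := Rk_list A.
  rewrite -(indep_Rk uA iA); apply/eqP; rewrite eqn_leq.
  rewrite (Rk_clsub nzA (fun a => proj2 (hclA a))) /=.
  exact: Rk_sub nzO hAO.
pose S := fun a => Zpoly sigma delta P a /\ Om a.
have nzS : has_nz S by apply: has_nz_sub nzO; apply: sub_cl => a [].
have wtE : forall A, wtH (evalvec sigma delta A P) =
    (size A - size (filter (fun a => ev P a == 0%R) A))%N.
  move=> A; rewrite /wtH /evalvec count_map size_filter.
  rewrite -(count_predC (fun a => ev P a == 0) A) addKn.
  by apply: eq_count => a.
have lower : forall A, Pbasis sigma delta A Om -> (w <= wtH (evalvec sigma delta A P))%N.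
  move=> A hA; have [uA hAO iA _] := hA.
  pose A0 := filter (fun a => ev P a == 0%R) A.
  have iA0 : Pindependent sigma delta (lp A0).
    by apply: indep_sub iA => b; rewrite /lp mem_filter => /andP [].
  have sA0 : sub (lp A0) S.
    move=> b; rewrite /lp mem_filter => /andP [/eqP e bA]; split; last exact: hAO.
    by move=> Q ->.
  have := Rk_sub nzS sA0; rewrite indep_Rk ?filter_uniq // => h.
  rewrite wtE /w /skew_wt -/S (Rk_basis _ hA).
  by rewrite leq_sub2l.
split; last exact: lower; last exact: lower.
have i0 : Pindependent sigma delta (lp [::]) by move=> a; rewrite /lp in_nil.
have s0 : sub (lp [::]) S by move=> a; rewrite /lp in_nil.
have [C [uC iC sCS clC _]] := greedy nzS (isT : uniq [::]) i0 s0.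
have sCO : sub (lp C) Om by move=> b /sCS [].
have [A [uA iA sAO clA sCA]] := greedy nzO uC iC sCO.
have hA : Pbasis sigma delta A Om.
  split => // a; split; last exact: clA.
  by move=> h; apply/HOm; apply: (cl_mono (sub_cl sAO)) h.
exists A; split => //; apply/eqP; rewrite eqn_leq lower // andbT.
rewrite wtE /w /skew_wt -/S (Rk_basis _ hA).
have hC0 : (size C <= size (filter (fun a => ev P a == 0%R) A))%N.
  apply: uniq_leq_size => // b bC; rewrite mem_filter (sCA b bC) andbT.
  by apply/eqP; have [zb _] := sCS b bC; apply: zb.
have [nzC _] := Rk_list C.
have hS : (Rk S <= size C)%N by rewrite -(indep_Rk uC iC); apply: Rk_clsub.
by move: hC0 hS; lia.
Qed.

End Alg.

Theorem mainTheorem3 (F : unitRingType)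
  (Fdiv : forall c : F, c != 0 -> c \is a GRing.unit)
  (sigma : {rmorphism F -> F}) (delta : F -> F)
  (delta_add : forall a b, delta (a + b) = delta a + delta b)
  (delta_mul : forall a b, delta (a * b) = sigma a * delta b + delta a * b)
  (Om : F -> Prop) (B : seq F)
  (HOm : Pclosed sigma delta Om) (HB : Pbasis sigma delta B Om)
  (P : {poly F}) (HP : (size P <= Rk sigma delta Om)%N) :
  let w := skew_wt sigma delta Om P in
  [/\ (exists A : seq F, Pbasis sigma delta A Om /\
         wtH (evalvec sigma delta A P) = w),
      (forall A : seq F, Pbasis sigma delta A Om ->
         (w <= wtH (evalvec sigma delta A P))%N)
    & (w <= wtH (evalvec sigma delta B P))%N].
Proof. exact: (main_sec Fdiv delta_add delta_mul HOm HB P). Qed.
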